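(* Let $m,n,k$ be positive integers with $(m,k-1)=1$ and $n=\mathrm{ind}_m(k)$, let $G=G(m,n,k)=\langle a,b;\ a^m=1,\ b^n=1,\ b^{-1}ab=a^k\rangle$, $R=\{k_j:j\in\mathbb{Z}_n\}$ and $L=\{-k_j:j\in\mathbb{Z}_n\}$. (i) If $\mathrm{orb}(x,R^* )$ is basic for every $x\in R^*$, then $\mathrm{P}(G)=\dot{\bigcup}_{x\in R^*}C(x,1)$ and $|\mathrm{P}(G)|=|R^*|\,m$. (ii) If $\mathrm{orb}(x,L^* )$ is basic for every $x\in L^*$, then $\Lambda(G)=\dot{\bigcup}_{x\in L^*}C(x,1)$ and $|\Lambda(G)|=|L^*|\,m$.
   Context: $\mathrm{ind}_m(k)$ is the least positive integer $d$ with $k^d\equiv1\pmod m$; $k_t=k^t-1\pmod m$. Elements of $G$ are written uniquely as $a^ib^j$, $i\in\mathbb{Z}_m$, $j\in\mathbb{Z}_n$. Commutators are $[x,y]=x^{-1}y^{-1}xy$; $(x)\rho(g)=[x,g]$, $(x)\lambda(g)=[g,x]$; maps are written on the right and composed left to right; $\mathrm{P}(G)$ and $\Lambda(G)$ are the semigroups generated by all $\rho(g)$, resp. all $\lambda(g)$. For $x,y\in\mathbb{Z}_m$, the map $\mu(x,y):G\to G$ is $(a^ib^j)\mu(x,y)=a^{xik^j-yk_j}$, and $C(x,y)=\{\mu(x,yz):z\in\mathbb{Z}_m\}$. For $S\subseteq\mathbb{Z}_m$, $S^*$ is the multiplicative subsemigroup of $\mathbb{Z}_m$ generated by $S$ and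 $I(S^* )$ is its set of elements invertible in $\mathbb{Z}_m$; $\mathrm{orb}(x,S^* )=\{xy:y\in I(S^* )\}$, and it is basic if it meets $S$. *)

(* Defs.v *)
From mathcomp Require Import all_boot.


(* Z_m is represented by 'I_(m.-1.+1) (= 'I_m when 0 < m); arithmetic is
   done on the nat representatives and reduced mod m. *)
Notation Zm m := ('I_(m.-1.+1)).

Definition is_ind (m k n : nat) : Prop :=
  0 < n /\ k ^ n = 1 %[mod m] /\ (forall d, 0 < d -> k ^ d = 1 %[mod m] -> n <= d).

Definition kt (m k t : nat) : nat := (k ^ t - 1) %% m.

(* Elements a^i b^j of G(m,n,k), encoded as the pair (i, j). *)
Definition Gel (m n : nat) := (Zm m * 'I_(n.-1.+1))%type.

(* a^i b^j * a^i' b^j' = a^(i + i' k^(-j)) b^(j + j'); k^(-j) = k^(n-j) mod m *)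
Definition Gmul (m n k : nat) (g h : Gel m n) : Gel m n :=
  (inord ((g.1 + h.1 * k ^ (n - g.2)) %% m), inord ((g.2 + h.2) %% n)).

(* (a^i b^j)^-1 = a^(-i k^j) b^(-j) *)
Definition Ginv (m n k : nat) (g : Gel m n) : Gel m n :=
  (inord ((m - (g.1 * k ^ g.2) %% m) %% m), inord ((n - g.2) %% n)).

Definition Gcomm (m n k : nat) (x y : Gel m n) : Gel m n :=
  Gmul m n k (Gmul m n k (Ginv m n k x) (Ginv m n k y)) (Gmul m n k x y).

Definition rho (m n k : nat) (g : Gel m n) : {ffun Gel m n -> Gel m n} :=
  [ffun x => Gcomm m n k x g].
Definition lam (m n k : nat) (g : Gel m n) : {ffun Gel m n -> Gel m n} :=
  [ffun x => Gcomm m n k g x].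

(* composition of maps written on the right: x (f g) = (x f) g *)
Definition fcomp (T : finType) (f g : {ffun T -> T}) : {ffun T -> T} :=
  [ffun x => g (f x)].

Arguments fcomp {T}.
Definition map_semigroup (T : finType) (S : {set {ffun T -> T}}) :
    {set {ffun T -> T}} :=
  [set f | [forall U : {set {ffun T -> T}},
     (S \subset U) &&
     [forall g in U, forall h in U, fcomp g h \in U] ==> (f \in U)]].

Arguments map_semigroup {T}.
Definition PG (m n k : nat) : {set {ffun Gel m n -> Gel m n}} :=
  map_semigroup [set rho m n k g | g : Gel m n].
Definition LambdaG (m n k : nat) : {set {ffun Gel m n -> Gel m n}} :=
  map_semigroup [set lam m n k g | g : Gel m n].

Definition zmul (m : nat) (x y : Zm m) : Zm m := inord ((x * y) %% m).

Definition zstar (m : nat) (S : {set Zm m}) : {set Zm m} :=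
  [set x | [forall U : {set Zm m},
     (S \subset U) && [forall y in U, forall z in U, zmul m y z \in U]
     ==> (x \in U)]].

Definition Iunits (m : nat) (T : {set Zm m}) : {set Zm m} :=
  [set x in T | coprime x m].

Definition orb (m : nat) (x : Zm m) (T : {set Zm m}) : {set Zm m} :=
  [set zmul m x y | y in Iunits m T].

Definition basic (m : nat) (x : Zm m) (S : {set Zm m}) : bool :=
  ~~ [disjoint orb m x (zstar m S) & S].

Definition Rset (m n k : nat) : {set Zm m} :=
  [set (inord (kt m k j) : Zm m) | j : 'I_(n.-1.+1)].
Definition Lset (m n k : nat) : {set Zm m} :=
  [set (inord ((m - kt m k j) %% m) : Zm m) | j : 'I_(n.-1.+1)].

(* mu(x, y) : a^i b^j |-> a^(x i k^j - y k_j) -- note i, j are nat representatives *)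
Definition mu (m n k : nat) (x y : nat) : {ffun Gel m n -> Gel m n} :=
  [ffun g : Gel m n =>
     (inord ((x * g.1 * k ^ g.2 + (m - (y * kt m k g.2) %% m)) %% m), ord0)].

Definition Cset (m n k : nat) (x y : nat) : {set {ffun Gel m n -> Gel m n}} :=
  [set mu m n k x (y * z) | z : Zm m].

(* Main.v *)
Require Import Defs.
From mathcomp Require Import all_boot.
From mathcomp Require Import all_algebra all_fingroup all_solvable.
From mathcomp Require Import ring zify.
Set Warnings "-notation-overridden -ambiguous-paths".
Import GRing.Theory.

Section S.
Variables (m : nat).
Hypothesis m_gt0 : 0 < m.

Lemma modZ a b : (1 < m -> (a%:R : 'Z_m)%R = (b%:R)%R) -> a = b %[mod m].
Proof.
move=> H; case: (ltnP 1 m) => [m1|]; last first.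
  move=> Hm; have e : m = 1 by apply/eqP; rewrite eqn_leq Hm m_gt0.
  by rewrite e !modn1.
by rewrite -!(val_Zp_nat m1) H.
Qed.

Lemma Zmod a b : 1 < m -> a = b %[mod m] -> (a%:R : 'Z_m)%R = (b%:R)%R.
Proof. by move=> m1 e; rewrite -(Zp_nat_mod m1) e Zp_nat_mod. Qed.

Lemma Zm0 : 1 < m -> (m%:R : 'Z_m)%R = 0%R.
Proof. by move=> m1; rewrite -(Zp_nat_mod m1) modnn. Qed.

Lemma Zneg a : 1 < m -> ((m - a %% m)%:R : 'Z_m)%R = (- a%:R)%R.
Proof.
move=> m1; rewrite natrB; last by apply/ltnW; rewrite ltn_mod.
by rewrite Zm0 // Zp_nat_mod // sub0r.
Qed.

Lemma Zmodm a : 1 < m -> ((a %% m)%:R : 'Z_m)%R = (a%:R)%R.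
Proof. by move=> m1; rewrite (Zp_nat_mod m1). Qed.

Lemma predm : m.-1.+1 = m.
Proof. by rewrite prednK. Qed.

Lemma val_inord_mod a : nat_of_ord (inord (a %% m) : 'I_(m.-1.+1)) = a %% m.
Proof. by rewrite inordK // predm ltn_mod. Qed.

Lemma ltm (i : 'I_(m.-1.+1)) : nat_of_ord i < m.
Proof. by have := ltn_ord i; rewrite {2}predm. Qed.


End S.
Arguments modZ {m}.
Arguments Zmod {m}.
Arguments Zm0 {m}.
Arguments Zneg {m}.
Arguments Zmodm {m}.
Arguments predm {m}.
Arguments val_inord_mod {m}.
Arguments ltm {m}.

Section T.
Variables (m n k : nat).
Hypothesis m_gt0 : 0 < m.

Lemma mu_ext x x' y y' : x = x' %[mod m] -> y = y' %[mod m] ->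
  mu m n k x y = mu m n k x' y'.
Proof.
move=> ex ey; apply/ffunP=> g; rewrite !ffunE; congr (inord _, _).
have -> : (y * kt m k g.2) %% m = (y' * kt m k g.2) %% m.
  by rewrite -modnMml ey modnMml.
by rewrite -!mulnA -modnDml -modnMml ex modnMml modnDml.
Qed.

Lemma kt0 : kt m k 0 = 0.
Proof. by rewrite /kt expn0 subnn mod0n. Qed.

Lemma mu_comp x y x' y' :
  fcomp (mu m n k x y) (mu m n k x' y') = mu m n k (x * x') (x' * y).
Proof.
apply/ffunP=> g; rewrite !ffunE /= (val_inord_mod m_gt0) expn0 kt0 muln1 muln0 mod0n subn0.
congr (inord _, _); apply: (modZ m_gt0) => m1.
rewrite !(natrD, natrM, Zneg, Zmodm, Zm0) //. ring.
Qed.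

Lemma mu_inj x x' y y' : 1 < m -> 1 < n -> coprime m (k - 1) -> 0 < k ->
  mu m n k x y = mu m n k x' y' -> x = x' %[mod m] /\ y = y' %[mod m].
Proof.
move=> m1 n1 ck k0 e; split.
  have := congr1 (fun f : {ffun Gel m n -> Gel m n} => nat_of_ord (f (inord 1, ord0)).1) e.
  rewrite !ffunE /= !(val_inord_mod m_gt0) inordK; last by rewrite predm //.
  by rewrite expn0 kt0 !muln1 !muln0 mod0n subn0 !modnDr.

have := congr1 (fun f : {ffun Gel m n -> Gel m n} => nat_of_ord (f (ord0, inord 1)).1) e.
rewrite !ffunE /= !(val_inord_mod m_gt0) inordK ?prednK ?(ltnW n1) //.
rewrite !muln0 !mul0n !add0n => h.
have := Zmod _ _ m1 h; rewrite !(Zmodm, Zneg) // => /oppr_inj.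
rewrite !natrM /kt !Zmodm // expn1 => h2.
apply: (modZ m_gt0) => _; apply: (mulIr _ h2).
by rewrite unitZpE.
Qed.

Hypothesis n_gt0 : 0 < n.
Hypothesis kn : k ^ n = 1 %[mod m].
Hypothesis k_gt0 : 0 < k.

Local Notation K := (k%:R : 'Z_m)%R.

Lemma Kn : 1 < m -> (K ^+ n)%R = 1%R.
Proof. by move=> m1; rewrite -natrX (Zmod _ _ m1 kn). Qed.

Lemma Kexp a b : 1 < m -> a = b %[mod n] -> (K ^+ a)%R = (K ^+ b)%R.
Proof. by move=> m1 e; rewrite -(expr_mod a (Kn m1)) e expr_mod // Kn. Qed.

Lemma nsub (j : 'I_(n.-1.+1)) : 1 < n -> (((n - j)%:R) : 'Z_n)%R = (- (nat_of_ord j)%:R)%R.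
Proof.
move=> n1; rewrite natrB ?Zm0 ?sub0r //.
exact: ltnW (ltm n_gt0 j).
Qed.

Lemma Gcomm2 (x g : Gel m n) : nat_of_ord (Gcomm m n k x g).2 = 0.
Proof.
case: x g => [i j] [s t] /=.
rewrite /Gcomm /Gmul /Ginv /= !(val_inord_mod n_gt0).
apply/eqP; rewrite -(mod0n n); apply/eqP; apply: (modZ n_gt0) => n1.
rewrite !(Zmodm, natrD, nsub) //; ring.
Qed.

Lemma key (I S A A' B : 'Z_m) : (A' * A = 1 ->
  - (I * A) + - (S * B) * A + (I + S * A') * (A * B) = I * A * (B - 1) - S * B * (A - 1))%R.
Proof.
move=> h; rewrite mulrDl (_ : (S * A' * (A * B) = S * B * (A' * A))%R); last by ring.
by rewrite h; ring.
Qed.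

Lemma Gcomm1 (x g : Gel m n) : 1 < m ->
  (((nat_of_ord (Gcomm m n k x g).1)%:R : 'Z_m) =
  (x.1%:R * K ^+ x.2 * (K ^+ g.2 - 1) - g.1%:R * K ^+ g.2 * (K ^+ x.2 - 1)))%R.
Proof.
move=> m1; case: x g => [i j] [s t] /=.
rewrite /Gcomm /Gmul /Ginv /= !(val_inord_mod n_gt0) !(val_inord_mod m_gt0).
rewrite !(Zmodm, natrD, natrM, natrX, Zneg) //.
have e1 : (K ^+ (n - (n - j) %% n))%R = (K ^+ j)%R.
  apply: Kexp => //; apply: (modZ n_gt0) => n1.
  rewrite natrB; last by apply/ltnW; rewrite ltn_mod.
  by rewrite Zm0 ?Zmodm ?nsub ?opprK ?sub0r // add0r.
have e2 : (K ^+ (n - ((n - j) %% n + (n - t) %% n) %% n))%R = (K ^+ (j + t))%R.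
  apply: Kexp => //; apply: (modZ n_gt0) => n1.
  rewrite natrB; last by apply/ltnW; rewrite ltn_mod.
  rewrite Zm0 // Zmodm // natrD !Zmodm // !nsub // natrD; ring.
have hA : (K ^+ (n - j) * K ^+ j)%R = 1%R.
  by rewrite -exprD subnK ?Kn // ltnW // (ltm n_gt0 j).
rewrite e1 e2 exprD.
exact: key.
Qed.

Lemma eq_mod_small a b : a < m -> a = b %[mod m] -> a = b %% m.
Proof. by move=> h <-; rewrite modn_small. Qed.

Lemma rho_mu (g : Gel m n) :
  rho m n k g = mu m n k (kt m k g.2) (g.1 * k ^ g.2).
Proof.
apply/ffunP=> x; rewrite !ffunE.
have h1 := Gcomm1 x g; have h2 := Gcomm2 x g.
move: (Gcomm m n k x g) h1 h2 => [c1 c2] /= h1 h2.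
case: x h1 => [i j] /= h1; case: g h1 => [s t] /= h1.
apply: injective_projections => /=; apply: val_inj => /=.
  rewrite (val_inord_mod m_gt0); apply: eq_mod_small; first exact: ltm.
  apply: (modZ m_gt0) => m1; rewrite h1 //= /kt.
  rewrite !(natrD, natrM, natrX, Zneg, Zmodm) // !natrB ?expn_gt0 ?k_gt0 // !natrX ?Zm0 //.
  ring.
by rewrite h2.
Qed.

Lemma lam_mu (g : Gel m n) :
  lam m n k g = mu m n k ((m - kt m k g.2) %% m) ((m - (g.1 * k ^ g.2) %% m) %% m).
Proof.
apply/ffunP=> x; rewrite !ffunE.
have h1 := Gcomm1 g x; have h2 := Gcomm2 g x.
move: (Gcomm m n k g x) h1 h2 => [c1 c2] /= h1 h2.
case: x h1 => [i j] /= h1; case: g h1 => [s t] /= h1.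
apply: injective_projections => /=; apply: val_inj => /=.
  rewrite (val_inord_mod m_gt0); apply: eq_mod_small; first exact: ltm.
  apply: (modZ m_gt0) => m1; rewrite h1 //= /kt.
  rewrite !(natrD, natrM, natrX, Zneg, Zmodm) // !natrB ?expn_gt0 ?k_gt0 // !natrX ?Zm0 //.
  ring.
by rewrite h2.
Qed.
End T.


Section SG.
Variables (T : finType) (Gen : {set {ffun T -> T}}).

Lemma msg_gen f : f \in Gen -> f \in map_semigroup Gen.
Proof.
move=> fG; rewrite inE; apply/forallP => U; apply/implyP => /andP [sGU _].
exact: (subsetP sGU).
Qed.

Lemma msg_comp f g : f \in map_semigroup Gen -> g \in map_semigroup Gen ->
  fcomp f g \in map_semigroup Gen.
Proof.
rewrite !inE => /forallP hf /forallP hg; apply/forallP => U; apply/implyP => hU.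
have := hU => /andP [_ /forallP cU].
have fU := implyP (hf U) hU; have gU := implyP (hg U) hU.
by have := forallP (implyP (cU f) fU) g => /implyP; apply.
Qed.

Lemma msg_min (U : {set {ffun T -> T}}) : Gen \subset U ->
  (forall f g, f \in U -> g \in U -> fcomp f g \in U) ->
  map_semigroup Gen \subset U.
Proof.
move=> sGU cU; apply/subsetP => f; rewrite inE => /forallP /(_ U) /implyP; apply.
rewrite sGU /=; apply/forallP => g; apply/implyP => gU.
by apply/forallP => h; apply/implyP => hU; apply: cU.
Qed.
End SG.

Section ZS.
Variables (m : nat) (S : {set Zm m}).

Lemma zs_gen x : x \in S -> x \in zstar m S.
Proof.
move=> xS; rewrite inE; apply/forallP => U; apply/implyP => /andP [sGU _].
exact: (subsetP sGU).
Qed.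

Lemma zs_mul x y : x \in zstar m S -> y \in zstar m S -> zmul m x y \in zstar m S.
Proof.
rewrite !inE => /forallP hf /forallP hg; apply/forallP => U; apply/implyP => hU.
have := hU => /andP [_ /forallP cU].
have fU := implyP (hf U) hU; have gU := implyP (hg U) hU.
by have := forallP (implyP (cU x) fU) y => /implyP; apply.
Qed.

Lemma zs_min (U : {set Zm m}) : S \subset U ->
  (forall x y, x \in U -> y \in U -> zmul m x y \in U) ->
  zstar m S \subset U.
Proof.
move=> sGU cU; apply/subsetP => f; rewrite inE => /forallP /(_ U) /implyP; apply.
rewrite sGU /=; apply/forallP => g; apply/implyP => gU.
by apply/forallP => h; apply/implyP => hU; apply: cU.
Qed.
End ZS.


Section M.
Variables (m n k : nat).
Hypotheses (m_gt0 : 0 < m) (n_gt0 : 0 < n) (k_gt0 : 0 < k).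
Hypothesis ck : coprime m (k - 1).
Hypothesis n2 : 1 < m -> 1 < n.

Lemma Zm_eq (a b : Zm m) : a = b %[mod m] -> a = b.
Proof.
move=> e; apply: val_inj => /=.
by rewrite -(modn_small (ltm m_gt0 a)) -(modn_small (ltm m_gt0 b)).
Qed.

Lemma mu_inj2 x x' y y' : mu m n k x y = mu m n k x' y' ->
  x = x' %[mod m] /\ y = y' %[mod m].
Proof.
case: (ltnP 1 m) => [m1|m1].
  by apply: mu_inj => //; apply: n2.
have -> : m = 1 by apply/eqP; rewrite eqn_leq m1 m_gt0.
by rewrite !modn1.
Qed.

Local Notation P Gen := (map_semigroup Gen).

Lemma main (S : {set Zm m}) (Gen : {set {ffun Gel m n -> Gel m n}}) :
  (forall f, f \in Gen -> exists2 r : Zm m, r \in S & exists y, f = mu m n k r y) ->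
  (forall (r : Zm m) y, r \in S -> mu m n k r y \in Gen) ->
  (forall x, x \in zstar m S -> basic m x S) ->
  P Gen = \bigcup_(x in zstar m S) Cset m n k x 1
  /\ (forall x y, x \in zstar m S -> y \in zstar m S ->
           x != y -> [disjoint Cset m n k x 1 & Cset m n k y 1])
  /\ #|P Gen| = #|zstar m S| * m.
Proof.
move=> H1 H2 H3.
set U := \bigcup_(x in zstar m S) Cset m n k x 1.
have memU (x : Zm m) z : x \in zstar m S -> mu m n k x z \in U.
  move=> hx; apply/bigcupP; exists x => //; apply/imsetP.
  exists (inord (z %% m)) => //; apply: mu_ext => //.
  by rewrite mul1n (val_inord_mod m_gt0) modn_mod.
have PU : P Gen = U.
  apply/eqP; rewrite eqEsubset; apply/andP; split.
    apply: msg_min.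
      apply/subsetP => f /H1 [r rS [y ->]]; by apply: memU; apply: zs_gen.
    move=> f g /bigcupP [x hx /imsetP [z _ ->]] /bigcupP [x' hx' /imsetP [z' _ ->]].
    rewrite mu_comp //.
    rewrite (@mu_ext m n k _ (zmul m x x') _ (x' * (1 * z))); first by apply: memU; apply: zs_mul.
      by rewrite (val_inord_mod m_gt0) modn_mod.
    by [].
  set U' := [set w : Zm m | [forall c : Zm m, forall y : Zm m,
              (mu m n k c y \in P Gen) ==> (mu m n k (c * w) (w * y) \in P Gen)]].
  have U'nat w : w \in U' -> forall c y, mu m n k c y \in P Gen ->
                   mu m n k (c * w) (w * y) \in P Gen.
    rewrite inE => /forallP hw c y hc.
    have hc' : mu m n k (inord (c %% m) : Zm m) (inord (y %% m) : Zm m) \in P Gen.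
      by rewrite -(@mu_ext m n k c _ y _) // (val_inord_mod m_gt0) modn_mod.
    have := implyP (forallP (hw (inord (c %% m))) (inord (y %% m))) hc'.
    rewrite (@mu_ext m n k _ (c * w) _ (w * y)) // !(val_inord_mod m_gt0).
      by rewrite modnMml.
    by rewrite modnMmr.
  have sU' : zstar m S \subset U'.
    apply: zs_min.
      apply/subsetP => s sS; rewrite inE; apply/forallP => c; apply/forallP => y.
      apply/implyP => hc; rewrite -(@mu_comp m n k m_gt0 c y s 0).
      by apply: msg_comp => //; apply: msg_gen; apply: H2.
    move=> w1 w2 h1 h2; rewrite inE; apply/forallP => c; apply/forallP => y.
    apply/implyP => hc.
    have := U'nat _ h2 _ _ (U'nat _ h1 _ _ hc).
    rewrite (@mu_ext m n k _ (c * zmul m w1 w2) _ (zmul m w1 w2 * y)) //.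
      by rewrite (val_inord_mod m_gt0) modnMmr mulnA.
    rewrite (val_inord_mod m_gt0) modnMml; congr (_ %% _); ring.
  apply/subsetP => f /bigcupP [x hx /imsetP [z _ ->]].
  have := H3 _ hx; rewrite /basic => /pred0Pn [r /andP [/imsetP [u hu ->] rS]].
  move: hu; rewrite inE => /andP [uZ cu].
  have it : forall e y, mu m n k (zmul m x u * u ^ e) (u ^ e * y) \in P Gen.
    elim=> [|e IH] y.
      by rewrite expn0 muln1 mul1n; apply: msg_gen; apply: H2.
    have := U'nat u (subsetP sU' _ uZ) _ _ (IH (y)).
    move=> h; rewrite (_ : zmul m x u * u ^ e.+1 = zmul m x u * u ^ e * u).
      by rewrite (_ : u ^ e.+1 * y = u * (u ^ e * y)) // expnS mulnA.
    by rewrite expnSr mulnA.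
  have eu : u ^ totient m = 1 %[mod m] := Euler_exp_totient cu.
  have et : (totient m).-1.+1 = totient m by rewrite prednK // totient_gt0.
  move: (it (totient m).-1 (u * z)).
  rewrite (@mu_ext m n k _ x _ (1 * z)) //.
    rewrite (val_inord_mod m_gt0) modnMml -mulnA -expnS et.
    by rewrite -modnMmr eu modnMmr muln1.
  by rewrite mulnA -expnSr et -modnMml eu modnMml.
split => //; split.
  move=> x y hx hy nxy; rewrite disjoint_subset; apply/subsetP => f /imsetP [z _ ->].
  rewrite !inE; apply/negP => /imsetP [z' _].
  by move=> /mu_inj2 [/Zm_eq exy _]; rewrite exy eqxx in nxy.
rewrite PU.
have -> : U = [set mu m n k (nat_of_ord p.1) (1 * nat_of_ord p.2) | p : Zm m * Zm m in setX (zstar m S) [set: Zm m]].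
  apply/setP => f; apply/bigcupP/imsetP.
    case=> x hx /imsetP [z _ ->]; exists (x, z) => //.
    by rewrite in_setX hx in_setT.
  case=> [[x z]]; rewrite in_setX /= => /andP [hx _] ->; exists x => //.
  by apply/imsetP; exists z.
rewrite card_in_imset.
  by rewrite cardsX cardsT card_ord; congr (_ * _); rewrite prednK.
move=> [x z] [x' z'] _ _ /= /mu_inj2 [e1 e2].
have e3 : z = z' %[mod m] by rewrite -(mul1n z) -(mul1n z').
by rewrite (Zm_eq _ _ e1) (Zm_eq _ _ e3).
Qed.
End M.


Theorem corollary4p12 (m n k : nat) :
  0 < m -> 0 < n -> 0 < k ->
  coprime m (k - 1) -> is_ind m k n ->
  (* (i) *)
  ((forall x, x \in zstar m (Rset m n k) -> basic m x (Rset m n k)) ->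
     PG m n k = \bigcup_(x in zstar m (Rset m n k)) Cset m n k x 1
     /\ (forall x y, x \in zstar m (Rset m n k) -> y \in zstar m (Rset m n k) ->
           x != y -> [disjoint Cset m n k x 1 & Cset m n k y 1])
     /\ #|PG m n k| = #|zstar m (Rset m n k)| * m)
  /\
  (* (ii) *)
  ((forall x, x \in zstar m (Lset m n k) -> basic m x (Lset m n k)) ->
     LambdaG m n k = \bigcup_(x in zstar m (Lset m n k)) Cset m n k x 1
     /\ (forall x y, x \in zstar m (Lset m n k) -> y \in zstar m (Lset m n k) ->
           x != y -> [disjoint Cset m n k x 1 & Cset m n k y 1])
     /\ #|LambdaG m n k| = #|zstar m (Lset m n k)| * m).
Proof.
move=> m0 n0 k0 ck [_ [kn _]].
have n2 : 1 < m -> 1 < n.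
  move=> m1; case: n kn n0 => [//|[|n']] kn _ //.
  rewrite expn1 in kn.
  have hd : m %| k - 1 by rewrite -eqn_mod_dvd // kn.
  by move: ck; rewrite /coprime (gcdn_idPl hd) => /eqP mE; rewrite mE in m1.
have hkj : forall (j : 'I_(n.-1.+1)) y, y * k ^ (n - j) * k ^ j = y %[mod m].
  move=> j y; rewrite -mulnA -expnD subnK; last exact: ltnW (ltm n0 j).
  by rewrite -modnMmr kn modnMmr muln1.
rewrite /PG /LambdaG; split=> H3.
  apply: (@main m n k m0 k0 ck n2 (Rset m n k) [set rho m n k g | g : Gel m n]) => //.
- move=> f /imsetP [g _ ->]; exists (inord (kt m k g.2)).
    by apply/imsetP; exists g.2.
  exists (g.1 * k ^ g.2); rewrite rho_mu //; apply: mu_ext => //.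
  by rewrite /kt (val_inord_mod m0) modn_mod.
- move=> r y /imsetP [j _ ->]; apply/imsetP.
  exists (inord ((y * k ^ (n - j)) %% m), j) => //.
  rewrite rho_mu //=; apply: mu_ext.
    by rewrite /kt (val_inord_mod m0) modn_mod.
  by rewrite (val_inord_mod m0) modnMml hkj.
apply: (@main m n k m0 k0 ck n2 (Lset m n k) [set lam m n k g | g : Gel m n]) => //.
- move=> f /imsetP [g _ ->]; exists (inord ((m - kt m k g.2) %% m)).
    by apply/imsetP; exists g.2.
  exists ((m - (g.1 * k ^ g.2) %% m) %% m); rewrite lam_mu //; apply: mu_ext => //.
  by rewrite (val_inord_mod m0) modn_mod.
- move=> r y /imsetP [j _ ->]; apply/imsetP.
  exists (inord (((m - y %% m) * k ^ (n - j)) %% m), j) => //.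
  rewrite lam_mu //=; apply: mu_ext.
    by rewrite (val_inord_mod m0) modn_mod.
  rewrite (val_inord_mod m0) modnMml.
  apply: (modZ m0) => m1.
  rewrite !(Zneg, Zmodm) // !natrM Zneg // !mulNr opprK -!natrM.
  by apply/esym/Zmod; rewrite ?hkj.
Qed.
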